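(* For any $A\in\mathrm{GL}(\mathcal S)$ with $A\notin\mathrm{Inv}(\mathcal S)$, the centralizer of $A$ in $\mathrm{Inv}(\mathcal S)$ is a proper subgroup of $\mathrm{Inv}(\mathcal S)$; i.e. there exists $\varepsilon\in\mathrm{Inv}(\mathcal S)$ with $A\circ\varepsilon\neq\varepsilon\circ A$.
   Context: Work over an algebraically closed field of characteristic $\neq2$. $F(X)=\sum_{i=0}^6f_iX^i$, $f_6\neq0$, distinct roots $\theta_1,\dots,\theta_6$. $P_j(X)=\prod_{i\ne j}(X-\theta_i)$, $\omega_j=P_j(\theta_j)$. Points of $\mathbb P^5$ are identified with $P(X)=\sum_{j=0}^5p_jX^j$; $\pi_j=P(\theta_j)/\omega_j$. $\mathcal S\subset\mathbb P^5$ is defined by $\sum_j\theta_j^i\omega_j\pi_j^2=0$, $i=0,1,2$. $\varepsilon^{(i)}$ is the involution $\pi_j\mapsto(-1)^{\delta_{ij}}\pi_j$; $\mathrm{Inv}(\mathcal S)$ is the group of order 32 generated by them. The 32 lines $\varepsilon(\Delta_0)$, $\varepsilon\in\mathrm{Inv}(\mathcal S)$, with $\Delta_0=\{(p_0:p_1:0:0:0:0)\}$, are all the lines on $\mathcal S$. $\mathrm{GL}(\mathcal S)$ is the group of automorphisms of $\mathcal S$ which are restrictions of projective linear transformations of $\mathbb P^5$. *)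

(* Defs.v *)
From HB Require Import structures.
From mathcomp Require Import all_boot all_order all_algebra.
Set Implicit Arguments. Unset Strict Implicit. Unset Printing Implicit Defensive.
Import GRing.Theory.
Local Open Scope ring_scope.

Section KummerDefs.
Variable K : fieldType.
Variable theta : 'I_6 -> K.

(* omega_j = P_j(theta_j) = prod_{i <> j} (theta_j - theta_i) *)
Definition omega (j : 'I_6) : K := \prod_(i < 6 | i != j) (theta j - theta i).

(* Points of P^5: nonzero row vectors v = (p_0,...,p_5), P(X) = sum_k p_k X^k.
   pi_j(v) = P(theta_j) / omega_j *)
Definition piC (v : 'rV[K]_6) (j : 'I_6) : K :=
  (\sum_(k < 6) v ord0 k * theta j ^+ k) / omega j.

Definition inS (v : 'rV[K]_6) : Prop :=
  v != 0 /\ forall i : 'I_3,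
    \sum_(j < 6) theta j ^+ i * omega j * piC v j ^+ 2 = 0.

(* matrix of the linear change of coordinates p |-> pi  (row convention:
   (v *m piMat) 0 j = piC v j) *)
Definition piMat : 'M[K]_6 := \matrix_(k < 6, j < 6) (theta j ^+ k / omega j).

(* eps^(i) : pi_j |-> (-1)^{delta_ij} pi_j, written in p-coordinates
   (points act on the right: v |-> v *m M) *)
Definition epsMx (i : 'I_6) : 'M[K]_6 :=
  piMat *m diag_mx (\row_(j < 6) (if j == i then -1 else 1)) *m invmx piMat.

(* elements of Inv(S): the products of the generators eps^(i), i in s *)
Definition invMx (s : {set 'I_6}) : 'M[K]_6 := \prod_(i in s) epsMx i.

End KummerDefs.

Definition projEq (K : fieldType) (u v : 'rV[K]_6) : Prop :=
  exists c : K, c != 0 /\ u = c *: v.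

(* Main.v *)
Require Import Defs.
From HB Require Import structures.
From mathcomp Require Import all_boot all_order all_algebra all_field.
From Stdlib Require Import Classical.
Set Warnings "-all".
Set Implicit Arguments. Unset Strict Implicit.
Import GRing.Theory.
Local Open Scope ring_scope.

Definition combP (a b : nat) :=
  (a == b) || has (fun c => has (fun d => has (fun g => has (fun h =>
     uniq [:: a; b; c; d; g; h] && all (fun j => j \in [:: a; b; c; d; g; h]) (iota 0 6))
   (iota 0 6)) (iota 0 6)) (iota 0 6)) (iota 0 6).
Lemma combn : all (fun a => all (fun b => combP a b) (iota 0 6)) (iota 0 6).
Proof. by vm_compute. Qed.
Lemma inI (i : 'I_6) : (i : nat) \in iota 0 6.
Proof. by rewrite mem_iota add0n ltn_ord. Qed.
Lemma comb (a b : 'I_6) : a != b -> exists c d g h : 'I_6,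
  uniq [:: a; b; c; d; g; h] /\ forall j : 'I_6, j \in [:: a; b; c; d; g; h].
Proof.
move=> ab.
have H1 := allP combn _ (inI a).
have := allP H1 _ (inI b).
rewrite /combP; have -> : (nat_of_ord a == b) = false by apply/negbTE.
rewrite orFb.
case/seq.hasP=> c; rewrite mem_iota add0n => /andP[_ c6].
case/seq.hasP=> d; rewrite mem_iota add0n => /andP[_ d6].
case/seq.hasP=> g; rewrite mem_iota add0n => /andP[_ g6].
case/seq.hasP=> h; rewrite mem_iota add0n => /andP[_ h6].
case/andP=> U /allP C.
exists (Ordinal c6), (Ordinal d6), (Ordinal g6), (Ordinal h6); split.
  by rewrite -(map_inj_uniq val_inj).
move=> j; rewrite -(mem_map val_inj); exact: C (inI j).
Qed.

Section S.
Variable K : closedFieldType.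
Variable theta : 'I_6 -> K.
Hypothesis hinj : injective theta.

Definition om j := omega theta j.

Lemma om_neq0 j : om j != 0.
Proof.
rewrite /om /omega; apply/prodf_neq0 => i ij.
by rewrite subr_eq0; apply/eqP => /hinj E; rewrite E eqxx in ij.
Qed.

Definition Lin n (y : 'I_6 -> K) :=
  forall k, (k < n)%N -> \sum_(j < 6) theta j ^+ k * om j * y j = 0.

Lemma shift n y q : Lin n.+1 y -> Lin n (fun j => (theta j - theta q) * y j).
Proof.
move=> H k kn.
have E : \sum_(j < 6) theta j ^+ k * om j * ((theta j - theta q) * y j) =
  \sum_(j < 6) theta j ^+ k.+1 * om j * y j - theta q * \sum_(j < 6) theta j ^+ k * om j * y j.
  rewrite mulr_sumr -sumrB; apply: eq_bigr => j _.
  rewrite exprS mulrBl mulrBr; congr (_ - _).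
    by rewrite [theta j * _]mulrC -!mulrA; congr (_ * _); rewrite mulrCA.
  by rewrite mulrCA.
by rewrite E !H // ?mulr0 ?subrr // ltnW.
Qed.

Definition beta g h j := om j * ((theta j - theta g) * (theta j - theta h)).

Lemma lag y a b g h : Lin 3 y -> a != b ->
  (forall j, j != a -> j != b -> j != g -> j != h -> y j = 0) ->
  beta g h a * y a + beta g h b * y b = 0.
Proof.
move=> L ab Z.
have := shift h (shift g L) (ltnSn 0).
rewrite (bigD1 a) // (bigD1 b) /=; last by rewrite eq_sym.
rewrite big1 ?addr0.
  rewrite /beta !expr0 !mul1r => <-; congr (_ + _); rewrite !mulrA; congr (_ * _);
  by rewrite -!mulrA [(_ - theta h) * _]mulrC.
move=> j /andP[jb ja].
case: (eqVneq j g) => [->|jg]; first by rewrite subrr !(mul0r, mulr0).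
case: (eqVneq j h) => [->|jh]; first by rewrite subrr !(mul0r, mulr0).
by rewrite Z // !mulr0.
Qed.

Lemma beta_neq0 g h b : b != g -> b != h -> beta g h b != 0.
Proof.
move=> bg bh; rewrite /beta !mulf_neq0 ?om_neq0 // subr_eq0;
  apply/eqP => /hinj E; first by rewrite E eqxx in bg.
by rewrite E eqxx in bh.
Qed.

Lemma vanish y t p q : Lin 3 y -> t != p -> t != q ->
  (forall j, j != t -> j != p -> j != q -> y j = 0) -> y t = 0.
Proof.
move=> L tp tq Z.
have := lag (g:=p) (h:=q) L tp (fun j a b _ c => Z j a b c).
rewrite {2}/beta subrr !(mul0r, mulr0) addr0 => /eqP.
by rewrite mulf_eq0 (negbTE (beta_neq0 tp tq)) /= => /eqP.
Qed.

Definition Tq (x : 'rV[K]_6) := forall i : 'I_3,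
  \sum_(j < 6) theta j ^+ i * omega theta j * x ord0 j ^+ 2 = 0.

Lemma Tq_Lin x : Tq x -> Lin 3 (fun j => x ord0 j ^+ 2).
Proof. by move=> T k k3; exact: (T (Ordinal k3)). Qed.

Lemma sqrtK (r : K) : exists x : K, x ^+ 2 = r.
Proof.
have [x Hx] := @solve_monicpoly K 2 (fun n => if n == 0%N then r else 0) isT.
exists x; rewrite Hx big_ord_recr big_ord1 /= mul0r addr0 expr0 mulr1 //.
Qed.

Lemma point a b c d g h : b != g -> b != h -> g != h ->
  (forall j, j \in [:: a; b; c; d; g; h]) ->
  exists x : 'rV[K]_6, [/\ Tq x, x ord0 c = 0, x ord0 d = 0 & x ord0 a != 0].
Proof.
move=> bg bh gh cov.
pose B : 'M[K]_(6,5) := \matrix_(j, k) (if (k < 3)%N then theta j ^+ k * om j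
   else if k == 3 :> nat then (j == c)%:R else (j == d)%:R).
have kB : kermx B != 0.
  rewrite kermx_eq0 /row_free; apply/negP => /eqP E.
  by have := rank_leq_col B; rewrite E.
have [i ui] : exists i, row i (kermx B) != 0.
  case: (pickP (fun i => row i (kermx B) != 0)) => [i Hi|H]; first by exists i.
  case/negP: kB; apply/eqP/row_matrixP => i; rewrite row0.
  by apply/eqP; have := H i; rewrite /= => /negbFE.
set u := row i (kermx B).
have uB : u *m B = 0 by rewrite /u -row_mul mulmx_ker row0.
have E k : \sum_(j < 6) u ord0 j * B j k = 0.
  by have := congr1 (fun M : 'M[K]_(1,5) => M ord0 k) uB; rewrite !mxE.
pose y j := u ord0 j.
have Ly : Lin 3 y.
  move=> k k3; have k5 : (k < 5)%N by apply: ltn_trans k3 _.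
  have := E (Ordinal k5); rewrite /= => H; rewrite -[RHS]H.
  by apply: eq_bigr => j _; rewrite [B _ _]mxE /= k3 mulrC.
have Ysel (k : 'I_5) (e : 'I_6) : (k == 3 :> nat) || (k == 4 :> nat) ->
   (forall j, B j k = (j == e)%:R) -> y e = 0.
  move=> _ Hk; have := E k; rewrite (bigD1 e) //= big1.
    by rewrite Hk eqxx mulr1 addr0.
  by move=> j je; rewrite Hk (negbTE je) mulr0.
have yc : y c = 0.
  by apply: (Ysel (Ordinal (isT : (3 < 5)%N))) => // j; rewrite mxE.
have yd : y d = 0.
  by apply: (Ysel (Ordinal (isT : (4 < 5)%N))) => // j; rewrite mxE.
have ya : y a != 0.
  apply/negP => /eqP ya.
  have Z j : j != b -> j != g -> j != h -> y j = 0.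
    move=> jb jg jh; have := cov j; rewrite !inE (negbTE jb) (negbTE jg) (negbTE jh).
    by rewrite !orbF /= => /or3P[] /eqP ->.
  have yb : y b = 0 by apply: (vanish Ly bg bh) => j jb jg jh; apply: Z.
  have yg : y g = 0.
    apply: (vanish (p:=b) (q:=h) Ly); first by rewrite eq_sym.
      by [].
    by move=> j jg jb jh; apply: Z.
  have yh : y h = 0.
    apply: (vanish (p:=b) (q:=g) Ly); first by rewrite eq_sym.
      by rewrite eq_sym.
    by move=> j jh jb jg; apply: Z.
  have Y j : y j = 0.
    case: (eqVneq j b) => [->//|jb]; case: (eqVneq j g) => [->//|jg].
    case: (eqVneq j h) => [->//|jh]; exact: Z.
  by case/negP: ui; apply/eqP/rowP => j; rewrite [RHS]mxE; exact: Y j.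
have sq0 (z : K) : z ^+ 2 = 0 -> z = 0 by move/eqP; rewrite expf_eq0 /= => /eqP.
have [f Hf] := fin_all_exists (fun j : 'I_6 => sqrtK (y j)).
exists (\row_j f j); split; rewrite ?mxE ?Hf //.
  by move=> k; rewrite -[RHS](Ly k (ltn_ord k)); apply: eq_bigr => j _; rewrite mxE Hf.
- by apply: sq0; rewrite Hf.
- by apply: sq0; rewrite Hf.
by apply: contraNneq ya => fa; rewrite -Hf fa expr2 mul0r.
Qed.

Definition P := piMat theta.

Lemma P_unit : P \in unitmx.
Proof.
have -> : P = Vandermonde 6 (\row_j theta j) *m diag_mx (\row_j (om j)^-1).
  by apply/matrixP => k j; rewrite mul_mx_diag !mxE.
rewrite unitmxE unitfE det_mulmx det_Vandermonde det_diag mulf_neq0 //.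
  apply/prodf_neq0 => i _; apply/prodf_neq0 => j ij; rewrite !mxE subr_eq0.
  by apply/eqP => /hinj E; rewrite E ltnn in ij.
by apply/prodf_neq0 => i _; rewrite mxE invr_eq0 om_neq0.
Qed.

Definition D (s : {set 'I_6}) : 'M[K]_6 := diag_mx (\row_j (if j \in s then -1 else 1)).

Lemma invMxE s : invMx theta s = P *m D s *m invmx P.
Proof.
rewrite /invMx /epsMx.
have Hm : {morph (fun X : 'M[K]_6 => P *m X *m invmx P) : X Y / X * Y}.
  by move=> X Y /=; rewrite -!mulmxE !mulmxA mulmxKV ?P_unit.
have H1 : P *m 1 *m invmx P = 1 by rewrite mulmx1 mulmxV ?P_unit.
rewrite -(big_morph _ Hm H1); congr (_ *m _ *m _).
pose op (d e : 'rV[K]_6) := \row_j (d 0 j * e 0 j).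
have Hd : {morph (@diag_mx K 6) : d e / op d e >-> d * e}.
  by move=> d e; rewrite -mulmxE mulmx_diag.
have Hd1 : diag_mx (const_mx 1 : 'rV[K]_6) = 1.
  by apply/matrixP => i j; rewrite !mxE.
rewrite -(big_morph _ Hd Hd1); congr diag_mx; apply/rowP => j.
have Hr : {morph (fun r : 'rV[K]_6 => r 0 j) : d e / op d e >-> d * e}.
  by move=> d e; rewrite /op mxE.
rewrite (big_morph _ Hr (id1 := 1)) ?mxE //.
case: ifP => js.
  rewrite (bigD1 j) //= mxE eqxx big1 ?mulr1 // => i /andP[_ ij].
  by rewrite mxE eq_sym (negbTE ij).
rewrite big1 // => i ijs; rewrite mxE; case: eqP => // ji.
by rewrite ji ijs in js.
Qed.

Lemma piCE v j : piC theta v j = (v *m P) ord0 j.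
Proof.
rewrite /piC !mxE mulr_suml; apply: eq_bigr => k _; rewrite mxE mulrA //.
Qed.

Hypothesis h2 : (2%:R : K) != 0.

Lemma inSE x : inS theta (x *m invmx P) <-> x != 0 /\ Tq x.
Proof.
have E j : piC theta (x *m invmx P) j = x ord0 j by rewrite piCE mulmxKV ?P_unit.
have nz : (x *m invmx P != 0) = (x != 0).
  apply/idP/idP; apply: contraNneq => e; first by rewrite e mul0mx.
  by rewrite -[x](mulmxKV P_unit) e mul0mx.
rewrite /inS nz /Tq; split => [][x0 H]; split => // i; rewrite -[RHS](H i);
  by apply: eq_bigr => j _; rewrite E.
Qed.

Lemma Tq0 w i : Tq w -> (forall j, j != i -> w ord0 j = 0) -> w ord0 i = 0.
Proof.
move=> T Z; have := T ord0; rewrite (bigD1 i) //= big1 ?addr0.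
  by rewrite expr0 mul1r => /eqP; rewrite mulf_eq0 (negbTE (om_neq0 i)) expf_eq0 /= => /eqP.
by move=> j ji; rewrite Z // expr2 mulr0 mulr0.
Qed.

Variable M : 'M[K]_6.
Hypothesis hunit : M \in unitmx.
Hypothesis hGL : forall v : 'rV[K]_6, inS theta v <-> inS theta (v *m M).
Hypothesis hnotInv : forall s : {set 'I_6},
     ~ (forall v, inS theta v -> projEq (v *m M) (v *m invMx theta s)).

Lemma mainS : exists s : {set 'I_6},
    ~ (forall v, inS theta v ->
         projEq (v *m invMx theta s *m M) (v *m M *m invMx theta s)).
Proof.
apply: NNPP => Hn.
have H s v : inS theta v -> projEq (v *m invMx theta s *m M) (v *m M *m invMx theta s).
  move=> Sv; apply: NNPP => Hc; apply: Hn; exists s => Hall; exact: Hc (Hall v Sv).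
pose N := invmx P *m M *m P.
have Gx x : x != 0 -> Tq x -> x *m N != 0 /\ Tq (x *m N).
  move=> x0 Tx; apply/inSE.
  have -> : x *m N *m invmx P = x *m invmx P *m M by rewrite /N !mulmxA mulmxK ?P_unit.
  by apply: (proj1 (hGL _)); exact: (proj2 (inSE x) (conj x0 Tx)).
have Cx s x : x != 0 -> Tq x -> projEq (x *m D s *m N) (x *m N *m D s).
  move=> x0 Tx; have [c [c0 E]] := H s _ (proj2 (inSE x) (conj x0 Tx)).
  exists c; split => //.
  have e1 : x *m invmx P *m invMx theta s *m M *m P = x *m D s *m N.
    by rewrite invMxE /N !mulmxA mulmxKV ?P_unit.
  have e2 : x *m invmx P *m M *m invMx theta s *m P = x *m N *m D s.
    by rewrite invMxE /N !mulmxA mulmxKV ?P_unit.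
  by rewrite -e1 -e2 E -scalemxAl.
have xNE x j : (x *m N) ord0 j = \sum_(l < 6) x ord0 l * N l j by rewrite mxE.
have Zi i z : z != 0 -> Tq z -> z ord0 i = 0 -> (z *m N) ord0 i = 0.
  move=> z0 Tz zi.
  have zD : z *m D [set i] = z.
    apply/rowP => j; rewrite mul_mx_diag !mxE inE.
    by case: eqP => [->|_]; [rewrite zi mul0r | rewrite mulr1].
  have [c [c0 E]] := Cx [set i] z z0 Tz; rewrite zD in E.
  have [w0 Tw] := Gx z z0 Tz.
  set w := z *m N in E w0 Tw *. clearbody w.
  have Ew j : w ord0 j = c * (w ord0 j * (if j == i then -1 else 1)).
    by have := congr1 (fun A : 'M[K]_(1,6) => A ord0 j) E; rewrite mul_mx_diag !mxE inE.
  apply/eqP; apply/negPn/negP => wi.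
  have c1 : c = -1.
    have := Ew i; rewrite eqxx mulrN1 mulrN => /eqP; rewrite -subr_eq0 opprK.
    rewrite -[X in X + _]mul1r -mulrDl mulf_eq0 (negbTE wi) orbF addrC.
    by rewrite addr_eq0 => /eqP.
  apply: (negP wi); apply/eqP; apply: (Tq0 Tw) => j ji.
  have := Ew j; rewrite (negbTE ji) mulr1 c1 mulN1r => /eqP.
  rewrite -subr_eq0 opprK -mulr2n -mulr_natr mulf_eq0 (negbTE h2) orbF.
  by move/eqP.
have N0 a i : a != i -> N a i = 0.
  move=> ai; have [c [d [g [h [U cov]]]]] := comb ai.
  move: U; rewrite /= !inE !negb_or => /and5P[/and5P[_ ac _ ag ah] /and4P[ic _ _ _]
     /and3P[cd cg ch] /andP[dg dh] /andP[gh _]].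
  have [x [Tx xi xd xa]] : exists x : 'rV[K]_6,
      [/\ Tq x, x ord0 i = 0, x ord0 d = 0 & x ord0 a != 0].
    apply: (@point a c i d g h) => // j; have := cov j; rewrite !inE.
    by move=> /orP[->|/orP[->|/orP[->|/orP[->|/orP[->|->]]]]]; rewrite ?orbT.
  have x0 : x != 0 by apply: contraNneq xa => ->; rewrite mxE.
  pose x' := x *m D [set a].
  have x'E j : x' ord0 j = x ord0 j * (if j == a then -1 else 1).
    by rewrite /x' /D mul_mx_diag !mxE inE.
  have Tx' : Tq x'.
    move=> k; rewrite -[RHS](Tx k); apply: eq_bigr => j _; rewrite x'E.
    by case: eqP => _; rewrite ?mulr1 // mulrN1 sqrrN.
  have x'0 : x' != 0.
    by apply: contraNneq xa => e; have := x'E a; rewrite e mxE eqxx mulrN1 => /eqP; rewrite eq_sym oppr_eq0 => /eqP ->.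
  have x'i : x' ord0 i = 0 by rewrite x'E xi mul0r.
  have := Zi i x x0 Tx xi; have := Zi i x' x'0 Tx' x'i.
  rewrite !xNE => e1 e2.
  have : \sum_(l < 6) (x ord0 l - x' ord0 l) * N l i = 0.
    by under eq_bigr do rewrite mulrBl; rewrite sumrB e1 e2 subrr.
  rewrite (bigD1 a) //= big1 ?addr0.
    rewrite x'E eqxx mulrN1 opprK -mulr2n -mulr_natr => /eqP.
    by rewrite !mulf_eq0 (negbTE h2) (negbTE xa) /= => /eqP.
  by move=> j ja; rewrite x'E (negbTE ja) mulr1 subrr mul0r.
have Nd x j : (x *m N) ord0 j = x ord0 j * N j j.
  rewrite xNE (bigD1 j) //= big1 ?addr0 // => l lj.
  by rewrite N0 ?mulr0.
have Msq a b : N a a ^+ 2 = N b b ^+ 2.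
  case: (eqVneq a b) => [->//|ab].
  have [c [d [g [h [U cov]]]]] := comb ab.
  move: U; rewrite /= !inE !negb_or => /and5P[/and5P[_ ac ad ag ah] /and4P[bc bd bg bh]
     /and3P[cd cg ch] /andP[dg dh] /andP[gh _]].
  have [x [Tx xc xd xb]] : exists x : 'rV[K]_6,
      [/\ Tq x, x ord0 c = 0, x ord0 d = 0 & x ord0 b != 0].
    apply: (@point b a c d g h) => // j; have := cov j; rewrite !inE.
    by move=> /orP[->|/orP[->|/orP[->|/orP[->|/orP[->|->]]]]]; rewrite ?orbT.
  have x0 : x != 0 by apply: contraNneq xb => ->; rewrite mxE.
  have [_ TxN] := Gx x x0 Tx.
  have Z (y : 'I_6 -> K) : (forall j, x ord0 j = 0 -> y j = 0) ->
      forall j, j != a -> j != b -> j != g -> j != h -> y j = 0.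
    move=> Hy j ja jb jg jh; apply: Hy; have := cov j; rewrite !inE.
    rewrite (negbTE ja) (negbTE jb) (negbTE jg) (negbTE jh) /= orbF.
    by case/orP => /eqP ->.
  have Z1 : forall j, x ord0 j = 0 -> x ord0 j ^+ 2 = 0.
    by move=> j e; rewrite e expr2 mul0r.
  have Z2 : forall j, x ord0 j = 0 -> (x *m N) ord0 j ^+ 2 = 0.
    by move=> j e; rewrite Nd e mul0r expr2 mul0r.
  have e1 := lag (Tq_Lin Tx) ab (Z _ Z1).
  have e2 := lag (Tq_Lin TxN) ab (Z _ Z2).
  move: e2; rewrite !Nd !exprMn.
  have mA (u v w : K) : u * (v * w) = (u * v) * w by rewrite mulrA.
  rewrite (mA (beta g h a)) (mA (beta g h b)).
  move/eqP: e1; rewrite addr_eq0 => /eqP ->.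
  rewrite mulNr addrC -mulrBr => /eqP; rewrite mulf_eq0 mulf_eq0 (negbTE (beta_neq0 bg bh)) /=.
  by rewrite expf_eq0 (negbTE xb) /= subr_eq0 => /eqP ->.
have NU : N \in unitmx by rewrite /N !unitmx_mul unitmx_inv P_unit hunit.
have hM : M = P *m N *m invmx P by rewrite /N !mulmxA mulmxV ?P_unit // mul1mx mulmxK ?P_unit.
clearbody N.
pose l := N ord0 ord0.
pose s0 := [set j | N j j != l].
have Nj j : N j j = if j \in s0 then - l else l.
  rewrite inE; case: eqP => // /eqP nl.
  have := Msq j ord0; rewrite -/l => /eqP; rewrite -subr_eq0 subr_sqr mulf_eq0.
  by rewrite subr_eq0 (negbTE nl) /= addr_eq0 => /eqP.
have NE : N = l *: D s0.
  apply/matrixP => i j; rewrite !mxE.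
  case: (eqVneq i j) => [<-|ij]; last by rewrite N0 // mulr0n mulr0.
  by rewrite Nj mulr1n; case: ifP; rewrite ?mulrN1 ?mulr1.
have l0 : l != 0.
  apply: contraTneq NU => l0; rewrite NE l0 scale0r unitmxE det0.
  by rewrite unitr0.
apply: (@hnotInv s0) => v Sv; exists l; split => //.
by rewrite hM NE invMxE -scalemxAr -scalemxAl -scalemxAr.
Qed.
End S.

Unset Implicit Arguments.
Theorem mainTheorem11 (K : closedFieldType) (F : {poly K}) (theta : 'I_6 -> K)
  (hchar : (2%:R : K) != 0)
  (hdeg : size F = 7%N)
  (hinj : injective theta)
  (hroots : forall j, root F (theta j))
  (M : 'M[K]_6)
  (hunit : M \in unitmx)
  (hGL : forall v : 'rV[K]_6, inS theta v <-> inS theta (v *m M))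
  (hnotInv : forall s : {set 'I_6},
     ~ (forall v, inS theta v -> projEq (v *m M) (v *m invMx theta s))) :
  exists s : {set 'I_6},
    ~ (forall v, inS theta v ->
         projEq (v *m invMx theta s *m M) (v *m M *m invMx theta s)).
Proof.
exact: (@mainS K theta hinj hchar M hunit hGL hnotInv).
Qed.
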